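(* Let $n\ge1$, $k\ge0$ be integers and define the $n\times n$ matrices $M_0(n,k)=\big(\mathcal P^+_{i+j}(k,0)\big)_{0\le i,j\le n-1}$ and $MP_0(n,k)=\big(\sum_{l\ge0}\mathcal P^+_{i+j}(k,l)\big)_{0\le i,j\le n-1}$. Then $$A(n)\cdot MP_0(n,k)=M_0(n,k)+C_0(n,k),$$ where $C_0(n,k)=(C_{i,j})_{0\le i,j\le n-1}$ has $C_{i,j}=0$ for $i\le n-2$ and $C_{n-1,j}=(xy)^{n-1}\sum_{l\ge0}\mathcal P_j(0,n-k+l)$.
   Context: Three-step paths consist of up-steps $(1,1)$, level steps $(1,0)$ and down-steps $(1,-1)$. Weights: $w((1,1))=1$, $w((1,0))=x+y$, $w((1,-1))=xy$; a path's weight is the product of its step weights. $\mathcal P_n(k,l)$ is the sum of weights of all three-step paths from $(0,k)$ to $(n,l)$; $\mathcal P^+_n(k,l)$ the same restricted to paths never running below the $x$-axis. The matrix $A(n)=(A_{n,i,j})_{0\le i,j\le n-1}$ is defined by $A_{n,i,j}=\frac{(1+x)(1+y)}{xy}$ if $i=j<n-1$; $-\frac1{xy}$ if $i=j-1<n-1$; $A_{n,n-1,n-1}=\frac{xy-(n-1)(x+y)}{xy}$; for $j<n-1$, $$A_{n,n-1,j}=\frac{(-1)^{n+j}}{xy}\sum_{l=j}^{n}\left(\binom lj\binom{n+j-1-l}{j}x^{l-j}y^{n-1-l}+\binom lj\binom{n+j-l}{j}x^{l-j}y^{n-l}\right);$$ and $0$ otherwise (binomial coefficients $\binom ab=0$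 if $b<0$ or $a<b$). *)

(* Defs.v *)
From HB Require Import structures.
From mathcomp Require Import all_boot all_order all_algebra.
Set Implicit Arguments. Unset Strict Implicit. Unset Printing Implicit Defensive.
Import Order.TTheory GRing.Theory Num.Theory.
Local Open Scope ring_scope.

Section Paths.
Variable R : fieldType.
Variables x y : R.

(* P^+_m(k,l): weighted sum of three-step paths of length m from (0,k) to
   (m,l) never going below the x-axis (heights are nats). The last step is
   an up-step (weight 1) from l-1, a level step (weight x+y) from l, or a
   down-step (weight xy) from l+1. *)
Fixpoint Pplus (m k l : nat) : R :=
  match m with
  | 0 => (k == l)%:R
  | m'.+1 => (if l is l'.+1 then Pplus m' k l' else 0)
             + (x + y) * Pplus m' k l + x * y * Pplus m' k l.+1
  end.

Fixpoint Pz (m : nat) (k l : int) : R :=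
  match m with
  | 0 => (k == l)%:R
  | m'.+1 => Pz m' k (l - 1) + (x + y) * Pz m' k l + x * y * Pz m' k (l + 1)
  end.

Definition binz (a : int) (b : nat) : R :=
  if (a < 0)%R then 0 else ('C(`|a|%N, b))%:R.

Definition Aent (n i j : nat) : R :=
  if (i == j) && (i < n.-1)%N then (1 + x) * (1 + y) / (x * y)
  else if (i.+1 == j) && (i < n.-1)%N then - 1 / (x * y)
  else if (i == n.-1) && (j == n.-1) then (x * y - (n.-1)%:R * (x + y)) / (x * y)
  else if (i == n.-1) && (j < n.-1)%N then
    (-1) ^+ (n + j) / (x * y) *
    \sum_(j <= l < n.+1)
      (binz l%:Z j * binz (n%:Z + j%:Z - 1 - l%:Z) j * x ^+ (l - j)
         * y ^ (n%:Z - 1 - l%:Z)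
       + binz l%:Z j * binz (n%:Z + j%:Z - l%:Z) j * x ^+ (l - j)
         * y ^ (n%:Z - l%:Z))
  else 0.

Definition Amx (n : nat) : 'M[R]_n := \matrix_(i < n, j < n) Aent n i j.

(* Sums over l >= 0: the summands vanish beyond the stated finite bounds
   (a path of length m from height k ends at height <= k + m; and
   P_j(0, h) = 0 unless |h| <= j), so these finite sums are the sums
   over all l >= 0. *)
Definition sumPplus (m k : nat) : R := \sum_(l < k + m + 1) Pplus m k l.

Definition sumPz (n k j : nat) : R :=
  \sum_(l < j + k + 1) Pz j 0 (n%:Z - k%:Z + l%:Z).

Definition M0 (n k : nat) : 'M[R]_n := \matrix_(i < n, j < n) Pplus (i + j) k 0.

Definition MP0 (n k : nat) : 'M[R]_n := \matrix_(i < n, j < n) sumPplus (i + j) k.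

Definition C0 (n k : nat) : 'M[R]_n :=
  \matrix_(i < n, j < n)
    (if (i : nat) == n.-1 then (x * y) ^+ n.-1 * sumPz n k j else 0).

End Paths.

(* Main.v *)
Require Import Defs.
From HB Require Import structures.
From mathcomp Require Import all_boot all_order all_algebra.
From mathcomp Require Import zify ring.
Set Implicit Arguments. Unset Strict Implicit. Unset Printing Implicit Defensive.
Import Order.TTheory GRing.Theory Num.Theory.
Local Open Scope ring_scope.

Section S.
Variables (R : fieldType) (x y : R).

Definition Tf (v : nat -> R) (k : nat) : R :=
  v k.+1 + (x + y) * v k + (if k is k'.+1 then x * y * v k' else 0).

Lemma Pplus_supp m k l : (k + m < l)%N -> Pplus x y m k l = 0.
Proof.
elim: m l => [|m IH] l hl /=.
  have -> : (k == l) = false by apply/eqP; lia.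
  by [].
case: l hl => [|l] hl; first lia.
rewrite IH; last lia.
rewrite IH; last lia.
rewrite IH; last lia.
by rewrite !mulr0 !addr0.
Qed.

Lemma Tf_ext u v : (forall k, u k = v k) -> forall k, Tf u k = Tf v k.
Proof. by move=> h k; rewrite /Tf !h; case: k => // k; rewrite h. Qed.

Lemma iter_ext j u v : (forall k, u k = v k) -> forall k, iter j Tf u k = iter j Tf v k.
Proof.
elim: j => [|j IH] h k /=; first exact: h.
by apply: Tf_ext => k'; apply: IH.
Qed.

Lemma G m (v : nat -> R) k : \sum_(l < (k + m).+1) Pplus x y m k l * v l = iter m Tf v k.
Proof.
elim: m v k => [|m IH] v k.
  rewrite addn0 /= big_ord_recr /= eqxx mul1r. rewrite big1; first by rewrite add0r.
  move=> i _; rewrite (_ : (k == i) = false) ?mul0r //; apply/eqP; move: (ltn_ord i); lia.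
rewrite iterSr -IH.
rewrite addnS.
have -> : \sum_(l < (k + m).+2) Pplus x y m.+1 k l * v l =
  \sum_(l < (k + m).+2) (if (l : nat) is l'.+1 then Pplus x y m k l' else 0) * v l
  + (x + y) * \sum_(l < (k + m).+2) Pplus x y m k l * v l
  + x * y * \sum_(l < (k + m).+2) Pplus x y m k l.+1 * v l.
  rewrite !mulr_sumr -!big_split /=; apply: eq_bigr => i _.
  by rewrite !mulrDl !mulrA.
rewrite big_ord_recl /= mul0r add0r.
rewrite [X in _ + (x + y) * X + _]big_ord_recr /= Pplus_supp ?mul0r ?addr0; last lia.
rewrite [X in _ + _ + x * y * X]big_ord_recr /= Pplus_supp ?mul0r ?addr0; last lia.
rewrite [X in _ + _ + x * y * X]big_ord_recr /= Pplus_supp ?mul0r ?addr0; last lia.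
rewrite /Tf.
symmetry; under eq_bigr => i _ do rewrite !mulrDr.
rewrite !big_split /=.
rewrite [X in _ + _ + X = _]big_ord_recl /= mulr0 add0r.
rewrite !mulr_sumr; congr (_ + _ + _); apply: eq_bigr => i _;
  rewrite ?add0n /bump ?leq0n ?add1n /=; ring.
Qed.


Lemma Tf_lin (I : Type) (r : seq I) (Pr : pred I) (a : I -> R) (F : I -> nat -> R) k :
  Tf (fun k => \sum_(t <- r | Pr t) a t * F t k) k = \sum_(t <- r | Pr t) a t * Tf (F t) k.
Proof.
rewrite /Tf; case: k => [|k]; rewrite ?addr0 !mulr_sumr -!big_split /=;
  apply: eq_bigr => i _; ring.
Qed.

Lemma iter_lin j (I : Type) (r : seq I) (Pr : pred I) (a : I -> R) (F : I -> nat -> R) k :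
  iter j Tf (fun k => \sum_(t <- r | Pr t) a t * F t k) k
  = \sum_(t <- r | Pr t) a t * iter j Tf (F t) k.
Proof.
elim: j k => [|j IH] k //=.
rewrite (Tf_ext (v := fun k => \sum_(t <- r | Pr t) a t * iter j Tf (F t) k)) //.
exact: Tf_lin.
Qed.

Lemma Tf_lin2 a b u w k :
  Tf (fun k => a * u k + b * w k) k = a * Tf u k + b * Tf w k.
Proof. by rewrite /Tf; case: k => [|k]; ring. Qed.

Lemma iter_lin2 j a b u w k :
  iter j Tf (fun k => a * u k + b * w k) k = a * iter j Tf u k + b * iter j Tf w k.
Proof.
elim: j k => [|j IH] k //=.
rewrite (Tf_ext (v := fun k => a * iter j Tf u k + b * iter j Tf w k)) //.
exact: Tf_lin2.
Qed.

Lemma Pz_supp j (k h : int) : k + j%:Z < h -> Pz x y j k h = 0.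
Proof.
elim: j k h => [|j IH] k h hkh /=.
  rewrite (_ : (k == h) = false) //; apply/eqP; lia.
rewrite !IH ?mulr0 ?addr0 //; lia.
Qed.

Definition Qz j (h : int) N := \sum_(l < N) Pz x y j 0 (h + l%:Z).

Lemma Qz_N j h N N' : j%:Z < h + N%:Z -> (N <= N')%N -> Qz j h N' = Qz j h N.
Proof.
move=> h1 h2; rewrite /Qz -(subnKC h2) big_split_ord /= [X in _ + X]big1 ?addr0 //.
move=> i _; apply: Pz_supp; rewrite /=; lia.
Qed.

Lemma QzS j h N :
  Qz j.+1 h N = Qz j (h - 1) N + (x + y) * Qz j h N + x * y * Qz j (h + 1) N.
Proof.
rewrite /Qz /= !mulr_sumr -!big_split /=; apply: eq_bigr => i _.
by rewrite (addrAC h) (addrAC h (i%:Z) 1).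
Qed.

Definition ind n (l : nat) : R := (n <= l)%N%:R.

Lemma tail n j k N : (j <= n)%N -> j%:Z < n%:Z - k%:Z + N%:Z ->
  iter j Tf (ind n) k = Qz j (n%:Z - k%:Z) N.
Proof.
elim: j k N => [|j IH] k N hj hN.
  rewrite /= /ind /Qz; case: (leqP n k) => hk.
    have hl : (k - n < N)%N by lia.
    rewrite (bigD1 (Ordinal hl)) //= big1 ?addr0.
      by rewrite (_ : (0 == _) = true) //; apply/eqP; lia.
    move=> i /eqP hi; rewrite (_ : (0 == _) = false) //; apply/eqP => he; apply: hi.
    apply: val_inj => /=; lia.
  rewrite big1 // => i _; apply: Pz_supp; lia.
change (iter j.+1 Tf (ind n) k) with (Tf (iter j Tf (ind n)) k).
rewrite /Tf QzS.
rewrite (IH k.+1 N); [| lia | lia].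
rewrite (IH k N); [| lia | lia].
case: k hN => [|k] hN.
  rewrite /Qz [X in _ = _ + _ + _ * X]big1 ?mulr0 ?addr0.
    by congr (_ + _); apply: eq_bigr => i _; congr (Pz _ _ _ _ _); lia.
  move=> i _; apply: Pz_supp; lia.
rewrite (IH k N); [| lia | lia].
rewrite /Qz; congr (_ + _ + _ * _); apply: eq_bigr => i _; congr (Pz _ _ _ _ _); lia.
Qed.


Definition F a t1 t2 := \sum_(i < a.+1)
  ('C(i + t1, t1)%:R * x ^+ i) * ('C(a - i + t2, t2)%:R * y ^+ (a - i)).
Definition E a t := F a t t.

Lemma Lx a t1 t2 : F a.+1 t1.+1 t2 = F a.+1 t1 t2 + x * F a t1.+1 t2.
Proof.
rewrite /F.
transitivity (\sum_(i < a.+2) ('C(i + t1, t1)%:R * x ^+ i) * ('C(a.+1 - i + t2, t2)%:R * y ^+ (a.+1 - i))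
  + \sum_(i < a.+2) ('C(i + t1, t1.+1)%:R * x ^+ i) * ('C(a.+1 - i + t2, t2)%:R * y ^+ (a.+1 - i))).
  rewrite -big_split; apply: eq_bigr => i _ /=; rewrite addnS binS natrD; ring.
congr (_ + _).
rewrite big_ord_recl /= bin_small ?mul0r ?add0r; last lia.
rewrite mulr_sumr; apply: eq_bigr => i _.
rewrite /bump leq0n add1n subSS addSnnS exprS; ring.
Qed.

Lemma Ly a t1 t2 : F a.+1 t1 t2.+1 = F a.+1 t1 t2 + y * F a t1 t2.+1.
Proof.
rewrite /F big_ord_recr [in RHS]big_ord_recr /= subnn !add0n !binn.
rewrite [RHS]addrAC; congr (_ + _).
rewrite mulr_sumr -big_split; apply: eq_bigr => i _ /=.
have hi : (i <= a)%N by move: (ltn_ord i); lia.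
rewrite subSn // addnS binS addSnnS natrD exprS; ring.
Qed.

Lemma E0 t : E 0 t = 1.
Proof. by rewrite /E /F big_ord1 /= !binn !mul1r. Qed.

Lemma E1 t : E 1 t = t.+1%:R * (x + y).
Proof.
rewrite /E /F big_ord_recr big_ord1 /= subn0 subnn add0n binn add1n binSn.
ring.
Qed.

Lemma Lx0 a : F a.+1 0 0 = y ^+ a.+1 + x * F a 0 0.
Proof.
rewrite /F big_ord_recl /= !bin0 subn0 mulr_sumr; congr (_ + _).
  ring.
apply: eq_bigr => i _; rewrite !bin0 /bump leq0n add1n subSS exprS; ring.
Qed.

Lemma Erec0 a : E a.+2 0 + x * y * E a 0 = (x + y) * E a.+1 0.
Proof. rewrite /E !Lx0 !exprS; ring. Qed.

Lemma ErecS a t : E a.+2 t.+1 + x * y * E a t.+1 = E a.+2 t + (x + y) * E a.+1 t.+1.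
Proof. rewrite /E (Lx a.+1 t t.+1) (Ly a.+1 t t) (Lx a t t.+1); ring. Qed.

Definition vc m t : R := if (t <= m)%N then (-1) ^+ (m + t) * E (m - t) t else 0.

Lemma vc_0 m t : (m < t)%N -> vc m t = 0.
Proof. by move=> h; rewrite /vc leqNgt h. Qed.

Lemma vc_diag m : vc m m = 1.
Proof. by rewrite /vc leqnn subnn E0 exprD -expr2 sqrr_sign mulr1. Qed.

Lemma vc_rec m t : vc m.+2 t =
  (if t is t'.+1 then vc m.+1 t' else 0) - (x + y) * vc m.+1 t - x * y * vc m t.
Proof.
have sg : forall n, (-1) ^+ n.+1 = - (-1) ^+ n :> R by move=> n; rewrite exprS mulN1r.
case: (ltnP m.+2 t) => h1.
  case: t h1 => [|t] h1; first lia.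
  by rewrite !vc_0 ?mulr0 ?subr0 //; lia.
case: (ltnP m.+1 t) => h2.
  have -> : t = m.+2 by lia.
  rewrite /= !vc_diag (vc_0 (m := m.+1) (t := m.+2)) // (vc_0 (m := m) (t := m.+2)) //; ring.
case: (ltnP m t) => h3.
  have -> : t = m.+1 by lia.
  rewrite /= vc_diag (vc_0 (m := m) (t := m.+1)) // /vc !leqnSn.
  rewrite (_ : (m.+2 - m.+1 = 1)%N); last lia.
  rewrite (_ : (m.+1 - m = 1)%N); last lia.
  rewrite (_ : (m.+2 + m.+1 = (m + m).+3)%N); last lia.
  rewrite (_ : (m.+1 + m = (m + m).+1)%N); last lia.
  rewrite !E1 !sg exprD -expr2 sqrr_sign.
  rewrite -[m.+2]addn1 -[m.+1]addn1 !natrD. ring.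
rewrite /vc h3.
case: t h1 h2 h3 => [|t] h1 h2 h3.
  have e1 : (0 <= m.+1)%N by lia.
  have e2 : (0 <= m.+2)%N by lia.
  rewrite e1 e2 !addn0 !subn0 !sg.
  have := Erec0 m; move=> e.
  have -> : E m.+2 0 = (x + y) * E m.+1 0 - x * y * E m 0 by rewrite -e; ring.
  ring.
have e1 : (t <= m.+1)%N by lia.
have e2 : (t.+1 <= m.+1)%N by lia.
have e3 : (t.+1 <= m.+2)%N by lia.
rewrite e1 e2 e3.
rewrite (_ : (m.+2 - t.+1 = (m - t.+1).+2)%N); last lia.
rewrite (_ : (m.+1 - t = (m - t.+1).+2)%N); last lia.
rewrite (_ : (m.+1 - t.+1 = (m - t.+1).+1)%N); last lia.
rewrite (_ : (m.+2 + t.+1 = (m + t).+3)%N); last lia.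
rewrite (_ : (m.+1 + t = (m + t).+1)%N); last lia.
rewrite (_ : (m.+1 + t.+1 = (m + t).+2)%N); last lia.
rewrite (_ : (m + t.+1 = (m + t).+1)%N); last lia.
rewrite !sg.
have := ErecS (m - t.+1) t; move=> e.
have -> : E (m - t.+1).+2 t.+1 = E (m - t.+1).+2 t + (x + y) * E (m - t.+1).+1 t.+1
   - x * y * E (m - t.+1) t.+1 by rewrite -e; ring.
ring.
Qed.


Definition one : nat -> R := fun _ => 1.
Definition e0 : nat -> R := fun l => (l == 0)%N%:R.

Definition Z m k := \sum_(t < m.+1) vc m t * iter t Tf one k.

Lemma Z0 k : Z 0 k = 1.
Proof. by rewrite /Z big_ord1 vc_diag mul1r. Qed.

Lemma Z1 k : Z 1 k = Tf one k - (x + y).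
Proof.
rewrite /Z big_ord_recr big_ord1 /= vc_diag /vc /= subn0 E1 /one; ring.
Qed.

Lemma ZS m k : Z m.+2 k = Tf (Z m.+1) k - (x + y) * Z m.+1 k - x * y * Z m k.
Proof.
rewrite /Z.
under eq_bigr => t _ do rewrite vc_rec !mulrBl.
rewrite !big_split /= !sumrN.
rewrite Tf_lin.
congr (_ - _ - _).
- rewrite big_ord_recl /= mul0r add0r; apply: eq_bigr => i _; done.
- rewrite big_ord_recr /= (vc_0 (m := m.+1) (t := m.+2)) // mulr0 mul0r addr0.
  rewrite mulr_sumr; apply: eq_bigr => i _; ring.
- rewrite big_ord_recr /= (vc_0 (m := m) (t := m.+2)) // mulr0 mul0r addr0.
  rewrite big_ord_recr /= (vc_0 (m := m) (t := m.+1)) // mulr0 mul0r addr0.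
  rewrite mulr_sumr; apply: eq_bigr => i _; ring.
Qed.

Lemma Tf_sub u w k : Tf (fun k => u k - w k) k = Tf u k - Tf w k.
Proof. by rewrite /Tf; case: k => [|k]; ring. Qed.

Definition Y m k := Z m.+1 k - Z m k.

Lemma Ystep m k : Y m.+2 k = Tf (Y m.+1) k - (x + y) * Y m.+1 k - x * y * Y m k.
Proof. rewrite /Y !ZS Tf_sub; ring. Qed.

Lemma Ypair m : (forall k, Y m k = (x * y) ^+ m.+1 * ((m < k)%N)%:R) /\
       (forall k, Y m.+1 k = (x * y) ^+ m.+2 * ((m.+1 < k)%N)%:R).
Proof.
elim: m => [|m [IH1 IH2]].
  have Y0 : forall k, Y 0 k = (x * y) ^+ 1 * ((0 < k)%N)%:R.
    by move=> k'; rewrite /Y Z1 Z0 /Tf /one; case: k' => [|k'] /=; ring.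
  split => // k'.
  have -> : Y 1 k' = Tf (Y 0) k' - (x + y) * Y 0 k' - x * y.
    rewrite (Tf_ext (u := Y 0) (v := fun k => Z 1 k - Z 0 k)) // Tf_sub.
    rewrite (Tf_ext (u := Z 0) (v := one) Z0).
    rewrite /Y ZS Z0 [Z 1 k']Z1 /one; ring.
  rewrite (Tf_ext Y0) /Tf !Y0.
  case: k' => [|[|k']] /=; ring.
split => // k'.
rewrite Ystep (Tf_ext IH2) /Tf !IH2 IH1.
case: k' => [|k'] /=; rewrite ?ltnS !exprS; ring.
Qed.

Lemma Yval m k : Y m k = (x * y) ^+ m.+1 * ((m < k)%N)%:R.
Proof. by case: (Ypair m) => h _; apply: h. Qed.


Lemma Tone k : Tf one k = (1 + x) * (1 + y) * one k + (- (x * y)) * e0 k.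
Proof. by rewrite /Tf /one /e0; case: k => [|k] /=; ring. Qed.

Lemma Sone m k : sumPplus x y m k = iter m Tf one k.
Proof. by rewrite /sumPplus addn1 -G; apply: eq_bigr => i _; rewrite /one mulr1. Qed.

Lemma Pe0 m k : Pplus x y m k 0 = iter m Tf e0 k.
Proof.
rewrite -G big_ord_recl /= /e0 /= mulr1 big1 ?addr0 // => i _.
by rewrite /bump /= mulr0.
Qed.

Lemma binz_nat (a b : nat) : binz R a%:Z b = 'C(a, b)%:R.
Proof. by []. Qed.

Lemma binz_small (a : int) (b : nat) : a < b%:Z -> binz R a b = 0.
Proof.
rewrite /binz; case: ifP => // h1 h2.
rewrite bin_small //; lia.
Qed.

Lemma ASum n' t : (t <= n')%N ->
  \sum_(t <= l < n'.+2)
      (binz R l%:Z t * binz R (n'.+1%:Z + t%:Z - 1 - l%:Z) t * x ^+ (l - t)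
         * y ^ (n'.+1%:Z - 1 - l%:Z)
       + binz R l%:Z t * binz R (n'.+1%:Z + t%:Z - l%:Z) t * x ^+ (l - t)
         * y ^ (n'.+1%:Z - l%:Z))
  = E (n' - t) t + E (n'.+1 - t) t.
Proof.
move=> ht.
rewrite big_split /=; congr (_ + _).
  rewrite -{1}[t]add0n big_addn big_mkord.
  rewrite (_ : (n'.+2 - t = (n' - t).+2)%N); last lia.
  rewrite big_ord_recr /= [X in _ + X](_ : _ = 0) ?addr0; last first.
    rewrite (binz_small (a := _ - _)) ?mulr0 ?mul0r //; lia.
  rewrite /E /F; apply: eq_bigr => i _ /=.
  have hi : (i <= n' - t)%N by move: (ltn_ord i); lia.
  rewrite binz_nat.
  rewrite (_ : n'.+1%:Z + t%:Z - 1 - (i + t)%:Z = (n' - t - i + t)%N%:Z); last lia.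
  rewrite binz_nat.
  rewrite (_ : n'.+1%:Z - 1 - (i + t)%:Z = (n' - t - i)%N%:Z); last lia.
  rewrite -exprnP addnK addnC; ring.
rewrite -{1}[t]add0n big_addn big_mkord.
rewrite (_ : (n'.+2 - t = (n'.+1 - t).+1)%N); last lia.
rewrite /E /F; apply: eq_bigr => i _ /=.
have hi : (i <= n'.+1 - t)%N by move: (ltn_ord i); lia.
rewrite binz_nat.
rewrite (_ : n'.+1%:Z + t%:Z - (i + t)%:Z = (n'.+1 - t - i + t)%N%:Z); last lia.
rewrite binz_nat.
rewrite (_ : n'.+1%:Z - (i + t)%:Z = (n'.+1 - t - i)%N%:Z); last lia.
rewrite -exprnP addnK addnC; ring.
Qed.


Lemma bcoef n' t : x != 0 -> y != 0 -> (t < n'.+1)%N ->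
  Aent x y n'.+1 n' t
  = (vc n'.+1 t - vc n' t + (if t == n' then (1 + x) * (1 + y) else 0)) / (x * y).
Proof.
move=> hx hy ht.
have sg : forall n, (-1) ^+ n.+1 = - (-1) ^+ n :> R by move=> n; rewrite exprS mulN1r.
rewrite /Aent /= ltnn !andbF eqxx /=.
case: (ltnP t n') => h.
  have -> : (t == n') = false by apply/eqP; lia.
  rewrite ASum; last lia.
  have e1 : (t <= n'.+1)%N by lia. have e2 : (t <= n')%N by lia. rewrite /vc e1 e2.
  rewrite addSn sg; field.
  by rewrite hx hy.
have -> : t = n' by lia.
rewrite eqxx /vc leqnSn leqnn subnn E0 (_ : (n'.+1 - n' = 1)%N); last lia.
rewrite E1 addSn sg exprD -expr2 sqrr_sign.
rewrite -[n'.+1]addn1 natrD; field.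
by rewrite hx hy.
Qed.

Lemma Aent_row n' i t : (i < n')%N ->
  Aent x y n'.+1 i t = (i == t)%:R * ((1 + x) * (1 + y) / (x * y))
                       + (i.+1 == t)%:R * (- 1 / (x * y)).
Proof.
move=> hi; rewrite /Aent /= hi !andbT.
case: eqP => [<-|ne].
  rewrite (_ : (i.+1 == i) = false) /=; last by apply/eqP; lia.
  ring.
case: (eqVneq i.+1 t) => [e|ne2] /=.
  subst t.
  ring.
rewrite (_ : (i == n') = false) /=; last by apply/eqP; lia.
ring.
Qed.

Lemma sum_delta N (H : 'I_N -> R) i (hi : (i < N)%N) :
  \sum_(t < N) ((i == t)%:R * H t) = H (Ordinal hi).
Proof.
rewrite (bigD1 (Ordinal hi)) //= eqxx mul1r big1 ?addr0 // => t /eqP ht.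
rewrite (_ : (i == t) = false) ?mul0r //; apply/eqP => e; apply: ht.
by apply: val_inj => /=.
Qed.

Lemma Tf_iter_one i k : Tf (iter i Tf one) k
  = (1 + x) * (1 + y) * iter i Tf one k + (- (x * y)) * iter i Tf e0 k.
Proof.
change (Tf (iter i Tf one) k) with (iter i.+1 Tf one k).
rewrite iterSr (@iter_ext i _ (fun k => (1 + x) * (1 + y) * one k + (- (x * y)) * e0 k)).
  by rewrite iter_lin2.
exact: Tone.
Qed.

Lemma Kkey n' k : \sum_(t < n'.+1) (vc n'.+1 t - vc n' t
      + (if (t : nat) == n' then (1 + x) * (1 + y) else 0)) * iter t Tf one k
   = x * y * iter n' Tf e0 k + (x * y) ^+ n'.+1 * ind n'.+1 k.
Proof.
have Yv := Yval n' k.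
rewrite /Y in Yv.
have e1 : Z n'.+1 k = \sum_(t < n'.+1) vc n'.+1 t * iter t Tf one k + iter n'.+1 Tf one k.
  by rewrite /Z big_ord_recr /= vc_diag mul1r.
have e2 : \sum_(t < n'.+1) (if (t : nat) == n' then (1 + x) * (1 + y) else 0) * iter t Tf one k
    = (1 + x) * (1 + y) * iter n' Tf one k.
  rewrite big_ord_recr /= eqxx big1 ?add0r // => i _.
  rewrite (_ : ((widen_ord (leqnSn n') i : nat) == n') = false) ?mul0r //.
  by apply/eqP; move: (ltn_ord i) => /=; lia.
have e3 : iter n'.+1 Tf one k
    = (1 + x) * (1 + y) * iter n' Tf one k - x * y * iter n' Tf e0 k.
  rewrite iterSr (@iter_ext n' _ (fun k => (1 + x) * (1 + y) * one k + (- (x * y)) * e0 k)) //.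
    rewrite iter_lin2; ring.
  exact: Tone.
under eq_bigr => t _ do rewrite mulrDl mulrBl.
rewrite big_split /= e2 sumrB.
rewrite e1 e3 in Yv.
set S1 := \sum_(t < n'.+1) vc n'.+1 t * iter t Tf one k.
have -> : S1 = (x * y) ^+ n'.+1 * ((n' < k)%N)%:R + Z n' k
    - ((1 + x) * (1 + y) * iter n' Tf one k - x * y * iter n' Tf e0 k).
  rewrite -Yv /S1; ring.
rewrite /Z /ind /S1 exprS; ring.
Qed.

End S.

Theorem lemma11 (R : fieldType) (x y : R) (hx : x != 0) (hy : y != 0)
  (n k : nat) (hn : (1 <= n)%N) :
  Amx x y n *m MP0 x y n k = M0 x y n k + C0 x y n k.
Proof.
case: n hn => [|n'] // _.
apply/matrixP => i j; rewrite !mxE.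
under eq_bigr => t _ do rewrite !mxE Sone addnC iterD.
change (n'.+1.-1) with n'.
have hP : x * y != 0 by rewrite mulf_neq0.
case: (ltnP i n') => hi.
  rewrite (_ : ((i : nat) == n') = false) ?addr0; last by apply/eqP; lia.
  under eq_bigr => t _ do rewrite Aent_row // mulrDl -!mulrA.
  have h1 : (i < n'.+1)%N by lia.
  have h2 : (i.+1 < n'.+1)%N by lia.
  rewrite big_split /= (sum_delta _ h1) (sum_delta _ h2) /=.
  rewrite (@iter_ext R x y j (Tf x y (iter i (Tf x y) (one R))) (fun k => (1 + x) * (1 + y) * iter i (Tf x y) (one R) k
                  + (- (x * y)) * iter i (Tf x y) (e0 R) k)); last exact: Tf_iter_one.
  rewrite iter_lin2 Pe0 addnC iterD; field.
  by rewrite hx hy.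
have -> : (i : nat) = n' by move: (ltn_ord i); lia.
rewrite eqxx.
under eq_bigr => t _ do rewrite bcoef //.
rewrite -(@iter_lin R x y j _ (index_enum 'I_n'.+1) (fun _ => true)
  (fun t : 'I_n'.+1 => (vc x y n'.+1 t - vc x y n' t
      + (if (t : nat) == n' then (1 + x) * (1 + y) else 0)) / (x * y))
  (fun t : 'I_n'.+1 => iter t (Tf x y) (one R)) k).
rewrite (@iter_ext R x y j _ (fun k => 1 * iter n' (Tf x y) (e0 R) k + (x * y) ^+ n' * ind R n'.+1 k)); last first.
  move=> k'.
  under eq_bigr => t _ do rewrite mulrAC.
  rewrite -mulr_suml Kkey exprS; field.
  by rewrite hx hy.
rewrite (@iter_lin2 R x y j 1 ((x * y) ^+ n') (iter n' (Tf x y) (e0 R)) (ind R n'.+1)).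
rewrite mul1r Pe0 addnC iterD.
rewrite (@tail R x y n'.+1 j k (j + k + 1)); [by [] | by move: (ltn_ord j); lia | lia].
Qed.
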